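(* Let a logic be given by a sentential language with a constant expressive semantics over a finite set $V$ of truth values, whose consequence relation is induced by an intersective mixed consequence truth-relation $\models$, and suppose the logic has a G-conditional. Then for every classical connective $C$ (a truth function $\{0,1\}^n\to\{0,1\}$), there is a truth function $\underline{C^+}:V^n\to V$ such that a connective $C^+$ interpreted by it is regular for the logic with a regularity rule $(\mathcal{B}^p,\mathcal{B}^c)$ that is also satisfied by $C$ in classical logic.
   Context: Truth values: finite $V$ containing distinct $1,0$. A set of designated values is $\mathcal{D}\subseteq V$ with $1\in\mathcal{D}$, $0\notin\mathcal{D}$; the mixed truth-relation $\models_{\mathcal{D}_p,\mathcal{D}_c}$ holds between $\gamma,\delta\subseteq V$ iff ($\gamma\subseteq\mathcal{D}_p\Rightarrow\delta\cap\mathcal{D}_c\neq\emptyset$); an intersective mixed truth-relation is a finite intersection of such. A sentential language has denumerably many atoms and connectives; a semantics is a set of valuations mapping atoms to $V$, interpreting each $n$-ary connective by a fixed truth function $V^n\to V$ (same for all valuations), extended compositionally, and such that every assignment of values to finitely many distinct atoms is realized by some valuation. The induced consequence relation on sets of formulas: $\Gamma\vdash\Delta$ iff $v(\Gamma)\models v(\Delta)$ for every valuation $v$. Constant expressive: for every $\alpha\in V$ some formula has value $\alpha$ under every valuation. Write $\Gamma,A$ for $\Gamma\cup\{A\}$. An $n$-ary connective $C$ is regular with regularity rule $(\mathcal{B}^p,\mathcal{B}^c)$, $\mathcal{B}^p,\mathcal{B}^c\subseteq\mathcal{P}(\{1..n\})^2$, if for all $\Gamma,\Delta,F_1,\dots,F_n$: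 $\Gamma,C(F_1,\dots,F_n)\vdash\Delta$ iff for all $(B_p,B_c)\in\mathcal{B}^p$, $\Gamma\cup\{F_i:i\in B_p\}\vdash\{F_i:i\in B_c\}\cup\Delta$; and $\Gamma\vdash C(F_1,\dots,F_n),\Delta$ iff the same holds for all $(B_p,B_c)\in\mathcal{B}^c$. A G-conditional $\to$ is a binary connective with: $\Gamma\vdash A\to B,\Delta$ iff $\Gamma,A\vdash B,\Delta$; and $\Gamma,A\to B\vdash\Delta$ iff ($\Gamma\vdash A,\Delta$ and $\Gamma,B\vdash\Delta$). Classical logic: $V=\{0,1\}$ with the truth-relation $\models_{\{1\},\{1\}}$. *)

(* Defs.v *)
From mathcomp Require Import all_boot.

Set Implicit Arguments.
Unset Strict Implicit.
Unset Printing Implicit Defensive.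

Section Lang.
Variables (Con : Type) (ar : Con -> nat).

Inductive formula : Type :=
| Atom of nat
| App (c : Con) of ('I_(ar c) -> formula).

Definition interp (V : Type) := forall c : Con, ('I_(ar c) -> V) -> V.

Fixpoint eval (V : Type) (I : interp V) (s : nat -> V) (F : formula) : V :=
  match F with
  | Atom n => s n
  | App c g => I c (fun i => eval I s (g i))
  end.

Definition realizes_finite (V : Type) (S : (nat -> V) -> Prop) :=
  forall (A : seq nat) (g : nat -> V),
    exists2 s, S s & forall a, a \in A -> s a = g a.

Definition constant_expressive (V : Type) (S : (nat -> V) -> Prop) (I : interp V) :=
  forall alpha : V, exists F : formula, forall s, S s -> eval I s F = alpha.

Definition vimg (V : Type) (I : interp V) (s : nat -> V) (G : formula -> Prop) : V -> Prop :=
  fun x => exists2 F, G F & eval I s F = x.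

Definition consequence (V : Type) (S : (nat -> V) -> Prop) (I : interp V)
    (R : (V -> Prop) -> (V -> Prop) -> Prop) (G D : formula -> Prop) : Prop :=
  forall s, S s -> R (vimg I s G) (vimg I s D).

End Lang.

Arguments Atom {Con ar}.
Arguments App {Con ar}.

Definition addf (X : Type) (G : X -> Prop) (A : X) : X -> Prop :=
  fun F => G F \/ F = A.
Definition unionf (X : Type) (G D : X -> Prop) : X -> Prop :=
  fun F => G F \/ D F.
Definition imgf (X : Type) (n : nat) (F : 'I_n -> X) (B : {set 'I_n}) : X -> Prop :=
  fun G => exists2 i, i \in B & G = F i.

Definition designated (V : finType) (one zero : V) (D : {set V}) :=
  one \in D /\ zero \notin D.

Definition mixed (V : finType) (Dp Dc : {set V}) (g d : V -> Prop) : Prop :=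
  (forall x, g x -> x \in Dp) -> exists2 x, d x & x \in Dc.

Definition inter_mixed (V : finType) (L : seq ({set V} * {set V}))
    (g d : V -> Prop) : Prop :=
  forall p, p \in L -> mixed p.1 p.2 g d.

Definition regular (X : Type) (cons : (X -> Prop) -> (X -> Prop) -> Prop)
    (n : nat) (C : ('I_n -> X) -> X) (Bp Bc : {set {set 'I_n} * {set 'I_n}}) :=
  forall (G D : X -> Prop) (F : 'I_n -> X),
    (cons (addf G (C F)) D <->
       forall B, B \in Bp -> cons (unionf G (imgf F B.1)) (unionf (imgf F B.2) D))
 /\ (cons G (addf D (C F)) <->
       forall B, B \in Bc -> cons (unionf G (imgf F B.1)) (unionf (imgf F B.2) D)).

Definition Gconditional (X : Type) (cons : (X -> Prop) -> (X -> Prop) -> Prop)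
    (imp : X -> X -> X) :=
  forall (G D : X -> Prop) (A B : X),
    (cons G (addf D (imp A B)) <-> cons (addf G A) (addf D B))
 /\ (cons (addf G (imp A B)) D <-> (cons G (addf D A) /\ cons (addf G B) D)).

Definition has_Gconditional (Con : Type) (ar : Con -> nat)
    (cons : (formula ar -> Prop) -> (formula ar -> Prop) -> Prop) :=
  exists c0 : Con, ar c0 = 2 /\
    Gconditional cons
      (fun A B => App c0 (fun i : 'I_(ar c0) => if nat_of_ord i == 0 then A else B)).

Definition ext_ar (Con : Type) (ar : Con -> nat) (n : nat) : option Con -> nat :=
  fun c => match c with Some c' => ar c' | None => n end.

Definition ext_I (Con : Type) (ar : Con -> nat) (V : Type) (I : interp ar V)
    (n : nat) (f : ('I_n -> V) -> V) : interp (ext_ar ar n) V :=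
  fun c => match c return ('I_(ext_ar ar n c) -> V) -> V with
           | Some c' => I c'
           | None => f
           end.

Definition newconn (Con : Type) (ar : Con -> nat) (n : nat)
    (F : 'I_n -> formula (ext_ar ar n)) : formula (ext_ar ar n) :=
  @App _ (ext_ar ar n) None F.

Definition classical_cons (Con : Type) (ar : Con -> nat) (I : interp ar bool) :=
  consequence (fun _ : nat -> bool => True) I
    (inter_mixed [:: ([set true], [set true])]).

(* Main.v *)
Require Import Defs.
From mathcomp Require Import all_boot.
From Stdlib Require Import FunctionalExtensionality.
Set Implicit Arguments.
Unset Strict Implicit.

Definition subp {V : finType} (P' P : {set V} * {set V}) : bool :=
  (P.1 \subset P'.1) && (P'.2 \subset P.2).

Definition minimal {V : finType} (L : seq ({set V} * {set V})) (P : {set V} * {set V}) : bool :=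
  (P \in L) && all (fun P' => subp P' P ==> (P' == P)) L.

Lemma mixed_sub (V : finType) (P' P : {set V} * {set V}) g d :
  subp P' P -> mixed P'.1 P'.2 g d -> mixed P.1 P.2 g d.
Proof.
case/andP=> /subsetP H1 /subsetP H2 Hm Hg.
have [x dx xP] := Hm (fun x gx => H1 x (Hg x gx)).
by exists x => //; apply: H2.
Qed.

Lemma subp_trans (V : finType) (P1 P2 P3 : {set V} * {set V}) :
  subp P1 P2 -> subp P2 P3 -> subp P1 P3.
Proof.
case/andP=> a b /andP[c d]; apply/andP; split.
  exact: subset_trans c a.
exact: subset_trans b d.
Qed.

Lemma exists_minimal (V : finType) (L : seq ({set V} * {set V})) P :
  P \in L -> exists P', minimal L P' && subp P' P.
Proof.
move=> PL.
pose m (Q : {set V} * {set V}) := #|Q.1| + #|~: Q.2|.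
pose pr := [pred Q | (Q \in L) && subp Q P].
have HP : pr P.
  by rewrite /= PL /subp !subxx.
case: (@arg_maxnP _ P pr m HP) => Q /andP[QL QP] Hmax.
exists Q; rewrite QP andbT /minimal QL /=.
apply/allP => R RL; apply/implyP => RQ.
have RP : subp R P := subp_trans RQ QP.
have := Hmax R; rewrite /pr inE RL RP => /(_ isT).
case/andP: RQ => s1 s2.
have c1 := subset_leq_card s1.
have s2' : ~: Q.2 \subset ~: R.2 by rewrite setCS.
have c2 := subset_leq_card s2'.
rewrite /m => Hle.
have e1 : Q.1 == R.1.
  by rewrite eqEcard s1 /=; rewrite -(leq_add2r #|~: R.2|); apply: leq_trans Hle _; rewrite leq_add2l.
have e2 : ~: Q.2 == ~: R.2.
  by rewrite eqEcard s2' /=; rewrite -(leq_add2l #|R.1|); apply: leq_trans Hle _; rewrite leq_add2r.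
move/eqP: e1 => e1; move/eqP: e2 => e2.
have e2' : Q.2 = R.2 by rewrite -[Q.2]setCK e2 setCK.
by case: R Q e1 e2' {Hmax QL QP RL RP s1 s2 c1 s2' c2 Hle e2} => [? ?] [? ?] /= -> ->.
Qed.

Lemma inter_min (V : finType) (L : seq ({set V} * {set V})) g d :
  inter_mixed L g d <-> (forall P, minimal L P -> mixed P.1 P.2 g d).
Proof.
split.
  by move=> H P /andP[PL _]; apply: H.
move=> H P PL.
have [Q /andP[QM QP]] := exists_minimal PL.
exact: mixed_sub QP (H Q QM).
Qed.

Lemma mixed_min_const (V : finType) (L : seq ({set V} * {set V})) P (g d : V -> Prop) :
  minimal L P ->
  inter_mixed L (fun x => x \in P.1 \/ g x) (fun x => x \notin P.2 \/ d x) <->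
  ((forall x, g x -> x \in P.1) -> exists2 x, d x & x \in P.2).
Proof.
move=> /andP[PL /allP Hmin]; split.
  move=> H Hg.
  have [x [xn|dx] xP] := H P PL (fun x => fun h => match h with or_introl a => a | or_intror b => Hg x b end).
    by rewrite xP in xn.
  by exists x.
move=> H Q QL Hg.
case E: (Q.2 \subset P.2).
  have sQP : subp Q P.
    apply/andP; split => //; apply/subsetP => x xP; apply: Hg; by left.
  have /eqP QeP := implyP (Hmin Q QL) sQP.
  subst Q.
  have [x dx xP] := H (fun x gx => Hg x (or_intror gx)).
  by exists x => //; right.
move/negbT: E => /subsetPn [x xQ xnP].
by exists x => //; left.
Qed.

Lemma inter_ext (V : finType) (L : seq ({set V} * {set V})) g g' d d' :
  (forall x, g x <-> g' x) -> (forall x, d x <-> d' x) ->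
  inter_mixed L g d <-> inter_mixed L g' d'.
Proof.
move=> Hg Hd; split=> H P PL Hp.
  have [x /Hd dx xP] := H P PL (fun x gx => Hp x (proj1 (Hg x) gx)).
  by exists x.
have [x /Hd dx xP] := H P PL (fun x gx => Hp x (proj2 (Hg x) gx)).
by exists x.
Qed.

Lemma cons_min (Con : Type) (ar : Con -> nat) (V : finType) (I : interp ar V)
  (S : (nat -> V) -> Prop) (L : seq ({set V} * {set V})) P
  (G D : formula ar -> Prop) (g d : V -> Prop) :
  minimal L P -> (exists s, S s) ->
  (forall s, S s -> forall x, vimg I s G x <-> x \in P.1 \/ g x) ->
  (forall s, S s -> forall x, vimg I s D x <-> x \notin P.2 \/ d x) ->
  consequence S I (inter_mixed L) G D <->
  ((forall x, g x -> x \in P.1) -> exists2 x, d x & x \in P.2).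
Proof.
move=> HP [s0 Hs0] HG HD; split.
  move=> H; apply/(mixed_min_const _ _ HP).
  exact/(inter_ext _ (HG s0 Hs0) (HD s0 Hs0))/H.
move=> H s Hs; apply/(inter_ext _ (HG s Hs) (HD s Hs)).
exact/(mixed_min_const _ _ HP).
Qed.

Lemma vimg_add (Con : Type) (ar : Con -> nat) (V : Type) (I : interp ar V) s
  (G : formula ar -> Prop) A x :
  vimg I s (addf G A) x <-> vimg I s G x \/ x = eval I s A.
Proof.
split.
  by case=> F [GF|->] <-; [left; exists F|right].
by case=> [[F GF <-]|->]; [exists F => //; left | exists A => //; right].
Qed.

Lemma vimg_constset (Con : Type) (ar : Con -> nat) (V : Type) (I : interp ar V)
  (S : (nat -> V) -> Prop) (Q : V -> Prop) s x :
  constant_expressive S I -> S s ->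
  vimg I s (fun F => exists2 u, Q u & forall s, S s -> eval I s F = u) x <-> Q x.
Proof.
move=> Hc Hs; split.
  by case=> F [u Qu Hu] <-; rewrite Hu.
move=> Qx; have [F HF] := Hc x.
by exists F; [exists x|apply: HF].
Qed.

Lemma bool_imp (x y z : bool) : (x <-> (y -> z)) -> (~~ x) = y && ~~ z.
Proof. by case: x; case: y; case: z; rewrite /is_true /=; intuition congruence. Qed.

Lemma bool_and (x y z : bool) : (~ x <-> (y /\ ~ z)) -> x = ~~ y || z.
Proof. by case: x; case: y; case: z; rewrite /is_true /=; intuition congruence. Qed.

Lemma gcond_pw (Con : Type) (ar : Con -> nat) (V : finType) (I : interp ar V)
  (S : (nat -> V) -> Prop) (L : seq ({set V} * {set V})) (c0 : Con) :
  constant_expressive S I -> (exists s, S s) ->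
  Gconditional (consequence S I (inter_mixed L))
      (fun A B => App c0 (fun i : 'I_(ar c0) => if nat_of_ord i == 0 then A else B)) ->
  forall P, minimal L P -> forall a b : V,
  ((I c0 (fun i : 'I_(ar c0) => if nat_of_ord i == 0 then a else b)) \in P.1)
      = (a \notin P.2) || (b \in P.1) /\
  ((I c0 (fun i : 'I_(ar c0) => if nat_of_ord i == 0 then a else b)) \notin P.2)
      = (a \in P.1) && (b \notin P.2).
Proof.
move=> Hc HS Hg P HP a b.
have [Ka HKa] := Hc a; have [Kb HKb] := Hc b.
set f := I c0 _.
pose GP := fun F => exists2 u, u \in P.1 & forall s, S s -> eval I s F = u.
pose DP := fun F => exists2 u, u \notin P.2 & forall s, S s -> eval I s F = u.
pose imp := @App _ ar c0 (fun i : 'I_(ar c0) => if nat_of_ord i == 0 then Ka else Kb).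
have Himp : forall s, S s -> eval I s imp = f.
  move=> s Hs /=; rewrite /f; congr (I c0); apply: functional_extensionality => i.
  by case: (nat_of_ord i == 0); [exact: HKa|exact: HKb].
have vG : forall s, S s -> forall x, vimg I s GP x <-> x \in P.1 \/ False.
  move=> s Hs x; have := vimg_constset (fun u => u \in P.1) x Hc Hs; tauto.
have vD : forall s, S s -> forall x, vimg I s DP x <-> x \notin P.2 \/ False.
  move=> s Hs x; have := vimg_constset (fun u => u \notin P.2) x Hc Hs; tauto.
have vGA : forall A (c : V), (forall s, S s -> eval I s A = c) ->
    forall s, S s -> forall x, vimg I s (addf GP A) x <-> x \in P.1 \/ x = c.
  move=> A c HA s Hs x; have := vimg_add I s GP A x; have := vG s Hs x; rewrite HA //; tauto.
have vDA : forall A (c : V), (forall s, S s -> eval I s A = c) ->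
    forall s, S s -> forall x, vimg I s (addf DP A) x <-> x \notin P.2 \/ x = c.
  move=> A c HA s Hs x; have := vimg_add I s DP A x; have := vD s Hs x; rewrite HA //; tauto.
case: (Hg GP DP Ka Kb) => H1 H2.
have E1 := cons_min HP HS vG (vDA _ _ Himp).
have E2 := cons_min HP HS (vGA _ _ HKa) (vDA _ _ HKb).
have E3 := cons_min HP HS (vGA _ _ Himp) vD.
have E4 := cons_min HP HS vG (vDA _ _ HKa).
have E5 := cons_min HP HS (vGA _ _ HKb) vD.
split.
  apply: bool_and.
  have T3 : consequence S I (inter_mixed L) (addf GP imp) DP <-> ~ (f \in P.1).
    apply: iff_trans E3 _; split.
      by move=> H fP; have [x []] := H (fun x e => ltac:(rewrite e; exact fP)).
    by move=> H Hx; exfalso; apply: H; apply: Hx.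
  have T4 : consequence S I (inter_mixed L) GP (addf DP Ka) <-> (a \in P.2).
    apply: iff_trans E4 _; split.
      by move=> H; have [x -> ] := H (fun x (e : False) => match e with end).
    by move=> H _; exists a.
  have T5 : consequence S I (inter_mixed L) (addf GP Kb) DP <-> ~ (b \in P.1).
    apply: iff_trans E5 _; split.
      by move=> H bP; have [x []] := H (fun x e => ltac:(rewrite e; exact bP)).
    by move=> H Hx; exfalso; apply: H; apply: Hx.
  have := H2; rewrite /imp; move: T3 T4 T5; rewrite /imp.
  case: (a \in P.2); case: (b \in P.1); case: (f \in P.1); rewrite /is_true; intuition congruence.
apply: bool_imp.
have T1 : consequence S I (inter_mixed L) GP (addf DP imp) <-> (f \in P.2).
  apply: iff_trans E1 _; split.
    by move=> H; have [x -> ] := H (fun x (e : False) => match e with end).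
  by move=> H _; exists f.
have T2 : consequence S I (inter_mixed L) (addf GP Ka) (addf DP Kb) <-> (a \in P.1 -> b \in P.2).
  apply: iff_trans E2 _; split.
    by move=> H aP; have [x -> ] := H (fun x e => ltac:(rewrite e; exact aP)).
  by move=> H Hx; exists b => //; apply: H; apply: Hx.
move: H1 T1 T2; rewrite /imp; tauto.
Qed.

Lemma reg_gen (Con : Type) (ar : Con -> nat) (V : finType) (I : interp ar V)
  (S : (nat -> V) -> Prop) (L : seq ({set V} * {set V}))
  (Mn : {set V} * {set V} -> Prop) (n : nat) (Bp Bc : {set {set 'I_n} * {set 'I_n}})
  (conn : ('I_n -> formula ar) -> formula ar) :
  (forall g d, inter_mixed L g d <-> forall P, Mn P -> mixed P.1 P.2 g d) ->
  (forall F s, S s -> forall P, Mn P ->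
     (eval I s (conn F) \in P.1 <-> exists2 B, B \in Bp &
        (forall i, i \in B.1 -> eval I s (F i) \in P.1) /\
        (forall i, i \in B.2 -> eval I s (F i) \notin P.2))
  /\ (eval I s (conn F) \notin P.2 <-> exists2 B, B \in Bc &
        (forall i, i \in B.1 -> eval I s (F i) \in P.1) /\
        (forall i, i \in B.2 -> eval I s (F i) \notin P.2))) ->
  regular (consequence S I (inter_mixed L)) conn Bp Bc.
Proof.
move=> Hred Hc G D F.
have cE : forall G D, consequence S I (inter_mixed L) G D <->
    forall s, S s -> forall P, Mn P -> mixed P.1 P.2 (vimg I s G) (vimg I s D).
  move=> G' D'; split=> H s Hs.
    exact: (proj1 (Hred _ _) (H s Hs)).
  exact: (proj2 (Hred _ _) (H s Hs)).
split; split.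
- move=> H B HB; apply/cE => s Hs P HP Hprem.
  have [Hp _] := Hc F s Hs P HP.
  case E: [exists i in B.2, eval I s (F i) \in P.2].
    case/existsP: E => i /andP[iB iP]; exists (eval I s (F i)) => //.
    by exists (F i) => //; left; exists i.
  move/negbT: E; rewrite negb_exists_in => /forall_inP H2.
  have Ain : eval I s (conn F) \in P.1.
    apply/Hp; exists B => //; split => i iB; last exact: H2.
    by apply: Hprem; exists (F i) => //; right; exists i.
  have Hm := (proj1 (cE _ _) H) s Hs P HP.
  have [x [F' DF' <-] xP] : exists2 x, vimg I s D x & x \in P.2.
    apply: Hm => x [F' [GF'|->] <-] //.
    by apply: Hprem; exists F' => //; left.
  by exists (eval I s F') => //; exists F' => //; right.
- move=> H; apply/cE => s Hs P HP Hprem.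
  have [Hp _] := Hc F s Hs P HP.
  have Ain : eval I s (conn F) \in P.1.
    by apply: Hprem; exists (conn F) => //; right.
  have [B HB [c1 c2]] := proj1 Hp Ain.
  have Hm := (proj1 (cE _ _) (H B HB)) s Hs P HP.
  have [x [F' HF' ex] xP] : exists2 x, vimg I s (unionf (imgf F B.2) D) x & x \in P.2.
    apply: Hm => x [F' [GF'|[i iB ->]] <-].
      by apply: Hprem; exists F' => //; left.
    exact: c1.
  case: HF' => [[i iB eF]|DF'].
    by subst F' x; have := c2 i iB; rewrite xP.
  by exists x => //; exists F'.
- move=> H B HB; apply/cE => s Hs P HP Hprem.
  have [_ Hp] := Hc F s Hs P HP.
  case E: [exists i in B.2, eval I s (F i) \in P.2].
    case/existsP: E => i /andP[iB iP]; exists (eval I s (F i)) => //.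
    by exists (F i) => //; left; exists i.
  move/negbT: E; rewrite negb_exists_in => /forall_inP H2.
  have Anot : eval I s (conn F) \notin P.2.
    apply/Hp; exists B => //; split => i iB; last exact: H2.
    by apply: Hprem; exists (F i) => //; right; exists i.
  have Hm := (proj1 (cE _ _) H) s Hs P HP.
  have [x [F' HF' ex] xP] : exists2 x, vimg I s (addf D (conn F)) x & x \in P.2.
    apply: Hm => x [F' GF' <-].
    by apply: Hprem; exists F' => //; left.
  case: HF' => [DF'|eF].
    by exists x => //; exists F' => //; right.
  by subst F' x; rewrite xP in Anot.
- move=> H; apply/cE => s Hs P HP Hprem.
  have [_ Hp] := Hc F s Hs P HP.
  case E: (eval I s (conn F) \in P.2).
    by exists (eval I s (conn F)) => //; exists (conn F) => //; right.
  have [B HB [c1 c2]] := proj1 Hp (negbT E).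
  have Hm := (proj1 (cE _ _) (H B HB)) s Hs P HP.
  have [x [F' HF' ex] xP] : exists2 x, vimg I s (unionf (imgf F B.2) D) x & x \in P.2.
    apply: Hm => x [F' [GF'|[i iB ->]] <-].
      by apply: Hprem; exists F'.
    exact: c1.
  case: HF' => [[i iB eF]|DF'].
    by subst F' x; have := c2 i iB; rewrite xP.
  by exists x => //; exists F' => //; left.
Qed.

Definition negV (V : Type) (f : V -> V -> V) (zero : V) (a : V) := f a zero.
Definition orV (V : Type) (f : V -> V -> V) (zero : V) (a b : V) := f (negV f zero a) b.
Definition andV (V : Type) (f : V -> V -> V) (zero : V) (a b : V) :=
  negV f zero (orV f zero (negV f zero a) (negV f zero b)).
Definition litV (V : Type) (n : nat) (f : V -> V -> V) (zero : V) (x : 'I_n -> V)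
  (b : {ffun 'I_n -> bool}) (i : 'I_n) := if b i then x i else negV f zero (x i).
Definition conjV (V : Type) (n : nat) (f : V -> V -> V) (one zero : V) (x : 'I_n -> V)
  (b : {ffun 'I_n -> bool}) := foldr (andV f zero) one [seq litV f zero x b i | i <- enum 'I_n].
Definition Cplus (V : Type) (n : nat) (f : V -> V -> V) (one zero : V)
  (C : ('I_n -> bool) -> bool) (x : 'I_n -> V) :=
  foldr (orV f zero) zero (map (conjV f one zero x)
     (filter (fun b : {ffun 'I_n -> bool} => C b) (enum {ffun 'I_n -> bool}))).

Definition Bp_of (n : nat) (C : ('I_n -> bool) -> bool) : {set {set 'I_n} * {set 'I_n}} :=
  [set B | [exists b : {ffun 'I_n -> bool}, C b && (B == ([set i | b i], [set i | ~~ b i]))]].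
Definition Bc_of (n : nat) (C : ('I_n -> bool) -> bool) : {set {set 'I_n} * {set 'I_n}} :=
  [set B : {set 'I_n} * {set 'I_n} | [forall b : {ffun 'I_n -> bool},
     C b ==> ([exists i in B.2, b i] || [exists i in B.1, ~~ b i])]].

Lemma Bp_spec (n : nat) (C : ('I_n -> bool) -> bool) (pp qq : 'I_n -> bool) :
  (exists2 B, B \in Bp_of C & (forall i, i \in B.1 -> pp i) /\ (forall i, i \in B.2 -> qq i))
  <-> [exists b : {ffun 'I_n -> bool}, C b && [forall i, if b i then pp i else qq i]].
Proof.
split.
  move=> [B]; rewrite inE => /existsP[b /andP[Cb /eqP->]] [/= H1 H2].
  apply/existsP; exists b; rewrite Cb /=; apply/forallP => i.
  case E: (b i); [apply: H1|apply: H2]; by rewrite inE E.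
move/existsP=> [b /andP[Cb /forallP Hb]].
exists ([set i | b i], [set i | ~~ b i]).
  by rewrite inE; apply/existsP; exists b; rewrite Cb eqxx.
split=> i /=; rewrite inE => bi; have := Hb i.
  by rewrite bi.
by rewrite (negbTE bi).
Qed.

Lemma Bc_spec (n : nat) (C : ('I_n -> bool) -> bool) (pp qq : 'I_n -> bool) :
  (exists2 B, B \in Bc_of C & (forall i, i \in B.1 -> pp i) /\ (forall i, i \in B.2 -> qq i))
  <-> [forall b : {ffun 'I_n -> bool}, C b ==> [exists i, if b i then qq i else pp i]].
Proof.
split.
  move=> [B]; rewrite inE => /forallP HB [H1 H2].
  apply/forallP => b; apply/implyP => Cb.
  have /orP[/existsP[i /andP[iB bi]]|/existsP[i /andP[iB bi]]] := implyP (HB b) Cb.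
    by apply/existsP; exists i; rewrite bi; apply: H2.
  by apply/existsP; exists i; rewrite (negbTE bi); apply: H1.
move/forallP=> H.
exists ([set i | pp i], [set i | qq i]); last by split=> i /=; rewrite inE.
rewrite inE; apply/forallP => b; apply/implyP => Cb.
have /existsP[i] := implyP (H b) Cb.
case E: (b i) => Hi.
  by apply/orP; left; apply/existsP; exists i; rewrite /= inE Hi E.
by apply/orP; right; apply/existsP; exists i; rewrite /= inE Hi E.
Qed.

Section Alg.
Lemma alg_spec (V : eqType) (n : nat) (f : V -> V -> V) (one zero : V) (p q : V -> bool)
  (C : ('I_n -> bool) -> bool) (x : 'I_n -> V) :
  (forall a b, p (f a b) = q a || p b /\ q (f a b) = p a && q b) ->
  p one -> ~~ q one -> ~~ p zero -> q zero ->
  p (Cplus f one zero C x) =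
     [exists b : {ffun 'I_n -> bool}, C b && [forall i, if b i then p (x i) else q (x i)]]
  /\ q (Cplus f one zero C x) =
     [forall b : {ffun 'I_n -> bool}, C b ==> [exists i, if b i then q (x i) else p (x i)]].
Proof.
move=> hf p1 q1 p0 q0.
have pn a : p (negV f zero a) = q a by rewrite /negV (proj1 (hf _ _)) (negbTE p0) orbF.
have qn a : q (negV f zero a) = p a by rewrite /negV (proj2 (hf _ _)) q0 andbT.
have po a b : p (orV f zero a b) = p a || p b by rewrite /orV (proj1 (hf _ _)) qn.
have qo a b : q (orV f zero a b) = q a && q b by rewrite /orV (proj2 (hf _ _)) pn.
have pa a b : p (andV f zero a b) = p a && p b by rewrite /andV pn qo !qn.
have qa a b : q (andV f zero a b) = q a || q b by rewrite /andV qn po !pn.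
have pfo s : p (foldr (orV f zero) zero s) = has p s.
  by elim: s => [|a s IH] /=; [exact: negbTE p0 | rewrite po IH].
have qfo s : q (foldr (orV f zero) zero s) = all q s.
  by elim: s => [|a s IH] /=; [exact: q0 | rewrite qo IH].
have pfa s : p (foldr (andV f zero) one s) = all p s.
  by elim: s => [|a s IH] /=; [exact: p1 | rewrite pa IH].
have qfa s : q (foldr (andV f zero) one s) = has q s.
  by elim: s => [|a s IH] /=; [exact: negbTE q1 | rewrite qa IH].
have pl b i : p (litV f zero x b i) = if b i then p (x i) else q (x i).
  by rewrite /litV; case: (b i).
have ql b i : q (litV f zero x b i) = if b i then q (x i) else p (x i).
  by rewrite /litV; case: (b i).
rewrite /Cplus pfo qfo; split.
  apply/hasP/existsP.
    move=> [y] /mapP[b].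
    rewrite mem_filter => /andP[Cb _] -> {y}.
    rewrite /conjV pfa => /allP H; exists b; rewrite Cb /=; apply/forallP => i.
    by rewrite -pl; apply: H; apply/mapP; exists i => //; rewrite mem_enum.
  move=> [b /andP[Cb /forallP H]]; exists (conjV f one zero x b).
    by apply/mapP; exists b => //; rewrite mem_filter Cb mem_enum.
  rewrite /conjV pfa; apply/allP => y /mapP[i _ ->]; by rewrite pl.
apply/allP/forallP.
  move=> H b; apply/implyP => Cb.
  have := H (conjV f one zero x b).
  rewrite /conjV qfa => /(_ (map_f _ _)).
  rewrite mem_filter Cb mem_enum => /(_ isT) /hasP[y /mapP[i _ ->]].
  by rewrite ql => Hi; apply/existsP; exists i.
move=> H y /mapP[b]; rewrite mem_filter => /andP[Cb _] ->.
have /existsP[i Hi] := implyP (H b) Cb.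
rewrite /conjV qfa; apply/hasP; exists (litV f zero x b i); last by rewrite ql.
by apply/mapP; exists i => //; rewrite mem_enum.
Qed.
End Alg.

Lemma classical_spec (n : nat) (C : ('I_n -> bool) -> bool) (x : 'I_n -> bool) :
  C x = [exists b : {ffun 'I_n -> bool}, C b && [forall i, if b i then x i else ~~ x i]]
  /\ ~~ C x = [forall b : {ffun 'I_n -> bool}, C b ==> [exists i, if b i then ~~ x i else x i]].
Proof.
have ex : fun_of_fin [ffun i => x i] = x.
  by apply: functional_extensionality => i; rewrite ffunE.
have eb : forall b : {ffun 'I_n -> bool}, [forall i, if b i then x i else ~~ x i] -> fun_of_fin b = x.
  move=> b /forallP Hb; apply: functional_extensionality => i.
  by have := Hb i; case: (b i); case: (x i).
split.
  apply/idP/existsP.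
    move=> Cx; exists [ffun i => x i]; rewrite ex Cx /=.
    by apply/forallP => i; case: (x i).
  by move=> [b /andP[Cb /eb Hb]]; rewrite -Hb.
apply/idP/forallP.
  move=> nCx b; apply/implyP => Cb; apply/existsP.
  case: (boolP [forall i, b i == x i]) => [/forallP H|/forallPn [i Hi]].
    have eb' : fun_of_fin b = x.
      by apply: functional_extensionality => i; apply/eqP/H.
    by move: nCx; rewrite -eb' Cb.
  by exists i; move: Hi; case: (b i); case: (x i).
move=> H; apply/negP => Cx.
have := implyP (H [ffun i => x i]); rewrite ex => /(_ Cx) /existsP[i].
by case: (x i).
Qed.

Unset Implicit Arguments.

Theorem theorem3p19
  (V : finType) (one zero : V)
  (Con : countType) (ar : Con -> nat) (I : interp ar V)
  (S : (nat -> V) -> Prop) (L : seq ({set V} * {set V})) :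
  one != zero ->
  (exists g : nat -> Con, injective g) ->
  realizes_finite S ->
  constant_expressive S I ->
  L != [::] ->
  (forall p, p \in L -> designated one zero p.1 /\ designated one zero p.2) ->
  has_Gconditional (consequence S I (inter_mixed L)) ->
  forall (n : nat) (C : ('I_n -> bool) -> bool),
  exists (Cplus : ('I_n -> V) -> V) (Bp Bc : {set {set 'I_n} * {set 'I_n}}),
    regular (consequence S (ext_I I Cplus) (inter_mixed L)) (@newconn Con ar n) Bp Bc
    /\ (forall (Con0 : Type) (ar0 : Con0 -> nat) (I0 : interp ar0 bool),
          regular (classical_cons (ext_I I0 C)) (@newconn Con0 ar0 n) Bp Bc).
Proof.
move=> _ _ Hreal Hc _ Hdes [c0 [Har Hg]] n C.
have HS : exists s, S s by have [s Hs _] := Hreal [::] (fun _ => one); exists s.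
pose f (a b : V) := I c0 (fun i : 'I_(ar c0) => if nat_of_ord i == 0 then a else b).
have Hf := gcond_pw Hc HS Hg.
exists (Cplus f one zero C), (Bp_of C), (Bc_of C); split.
  apply: (@reg_gen _ _ V (ext_I I (Cplus f one zero C)) S L (fun P => minimal L P) n
            (Bp_of C) (Bc_of C) (@newconn Con ar n)).
    by move=> g d; apply: inter_min.
  move=> F s Hs P HP.
  rewrite /newconn /=.
  set x := (fun i => eval _ s (F i)).
  have [[d11 d12] [d21 d22]] := Hdes P (proj1 (andP HP)).
  have [A1 A2] := @alg_spec V n f one zero (fun u => u \in P.1) (fun u => u \notin P.2) C x
     (fun a b => Hf P HP a b) d11 (ltac:(by rewrite /= negbK)) d12 d22.
  split.
    by rewrite A1; apply: iff_sym; apply: Bp_spec.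
  by rewrite A2; apply: iff_sym; apply: Bc_spec.
move=> Con0 ar0 I0; rewrite /classical_cons.
apply: (@reg_gen _ _ _ (ext_I I0 C) (fun _ => True) [:: ([set true], [set true])]
          (fun P => P \in [:: ([set true], [set true])]) n
          (Bp_of C) (Bc_of C) (@newconn Con0 ar0 n)).
  by move=> g d; split.
move=> F s _ P; rewrite mem_seq1 => /eqP -> /=.
set x := (fun i => eval _ s (F i)).
have [K1 K2] := classical_spec C x.
have e : forall b, (b \in [set true]) = b by move=> b; rewrite in_set1 eqb_id.
split.
  rewrite e K1; apply: iff_sym; apply: iff_trans (Bp_spec _ _ _) _.
  by under eq_existsb => b do under eq_forallb => i do rewrite !e.
rewrite e K2; apply: iff_sym; apply: iff_trans (Bc_spec _ _ _) _.
by under eq_forallb => b do under eq_existsb => i do rewrite !e.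
Qed.
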